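(* Let $F$ be a field of characteristic $0$ and let $f\in F[X]$ be monic of degree $n\geq 1$. Let $K$ be a splitting field of $f$ over $F$, let $S(f)$ be the set of roots of $f$ in $K$, and for $\alpha\in S(f)$ let $m(\alpha)$ be the multiplicity of $\alpha$ as a root of $f$. Let $M_f\in K[X]$ be the unique polynomial of degree less than $|S(f)|$ satisfying $M_f(\alpha)=m(\alpha)$ for all $\alpha\in S(f)$. Set $f_0=f/\gcd(f,f')$, $s=\deg(f_0)$ and $P=f'/\gcd(f,f')$. Then there exist unique $g\in F_s[X]$ and $h\in F[X]$ such that $f_0'g+f_0h=1$. Moreover, for these $P$, $f_0$ and $g$, $$[M_f]=P(C_{f_0})\,[g].$$
   Context: Here $\gcd$ denotes the monic greatest common divisor and $f'$ the formal derivative. For a positive integer $s$, $F_s[X]$ denotes the subspace of $F[X]$ of polynomials of degree less than $s$, with basis $1,X,\dots,X^{s-1}$; for a polynomial $R$ of degree less than $s$ (with coefficients in $F$ or $K$), $[R]$ denotes the column vector of its coordinates $(r_0,\dots,r_{s-1})^T$ relative to $1,X,\dots,X^{s-1}$, where $R=r_0+r_1X+\dots+r_{s-1}X^{s-1}$. For a monic polynomial $q=q_0+q_1X+\cdots+q_{s-1}X^{s-1}+X^s$ of positive degree $s$, its companion matrix $C_q\in M_s(F)$ is the $s\times s$ matrix with $1$'s on the subdiagonal (entries $(i+1,i)$ for $i=1,\dots,s-1$), last column $(-q_0,-q_1,\dots,-q_{s-1})^T$, and all other entries $0$. For a polynomial $R$ and square matrix $A$, $R(A)$ denotes evaluation of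 $R$ at $A$. *)

(* Defs.v *)
From HB Require Import structures.
From mathcomp Require Import all_boot all_order all_algebra all_field.
Set Implicit Arguments. Unset Strict Implicit. Unset Printing Implicit Defensive.
Import GRing.Theory.
Local Open Scope ring_scope.

(* monic greatest common divisor (gcdp is only defined up to a unit) *)
Definition mgcd {F : fieldType} (p q : {poly F}) : {poly F} :=
  (lead_coef (gcdp p q))^-1 *: gcdp p q.

(* companion matrix of q (of size deg q): 1's on the subdiagonal,
   entries (i+1,i), last column (-q_0, ..., -q_{s-1})^T, 0 elsewhere *)
Definition compan {R : nzRingType} (q : {poly R}) : 'M[R]_((size q).-1) :=
  \matrix_(i < (size q).-1, j < (size q).-1)
    ((i == j.+1 :> nat)%:R - (if (j == (size q).-2 :> nat) then q`_i else 0)).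

Definition mxeval {R : comNzRingType} {n : nat} (A : 'M[R]_n) (p : {poly R}) : 'M[R]_n :=
  \sum_(i < size p) p`_i *: A ^+ i.

Definition coordv {R : nzRingType} (s : nat) (p : {poly R}) : 'cV[R]_s :=
  \col_(i < s) p`_i.

(* Main.v *)
Require Import Defs.
From HB Require Import structures.
From mathcomp Require Import all_boot all_order all_algebra all_field.
From mathcomp Require Import ring.
Import GRing.Theory.
Local Open Scope ring_scope.

Section Comp.
Variable F : fieldType.

Lemma modX_compan (q r : {poly F}) : q \is monic -> (1 < size q)%N ->
  (size r <= (size q).-1)%N ->
  ('X * r) %% q = 'X * r - r`_((size q).-2) *: q.
Proof.
move=> mq sq sr.
have q0 : q != 0 by rewrite monic_neq0.
have lq : q`_(size q).-1 = 1 by have := mq; rewrite monicE /lead_coef => /eqP.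
move: sq sr lq; case Es: (size q) => [|[|n]] // _ /= sr lq.
symmetry; apply: (@modpP _ _ (r`_n)%:P).
  by rewrite mul_polyC; ring.
rewrite Es ltnS; apply/leq_sizeP => j Hj.
rewrite coefB coefXM coefZ.
case: j Hj => // j; rewrite ltnS leq_eqVlt => /orP[/eqP<-|Hj] /=.
  by rewrite lq mulr1 subrr.
by rewrite (nth_default 0 (leq_trans sr Hj)) (nth_default 0 (_ : size q <= j.+1)%N) ?mulr0 ?subr0 // Es ltnS.
Qed.

Lemma compan_mul (q r : {poly F}) : q \is monic -> (1 < size q)%N ->
  (size r <= (size q).-1)%N ->
  compan q *m coordv (size q).-1 r = coordv (size q).-1 (('X * r) %% q).
Proof.
move=> mq sq sr.
have hs : ((size q).-2 < (size q).-1)%N by case: (size q) sq => [|[|n]].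
apply/matrixP => i j; rewrite !mxE modX_compan // coefB coefXM coefZ.
under eq_bigr do rewrite !mxE mulrBl; rewrite sumrB.
rewrite [X in _ - X](bigD1 (Ordinal hs)) //= eqxx [X in _ - (_ + X)]big1 ?addr0; last first.
  by move=> k Hk; rewrite ifN ?mul0r //; apply: contra Hk => /eqP Hk; apply/eqP/val_inj.
rewrite mulrC; congr (_ - _).
case Ei: (nat_of_ord i) => [|k].
  by rewrite big1 // => k _; rewrite mul0r.
have hk : (k < (size q).-1)%N by rewrite (leq_trans _ (ltn_ord i)) // Ei.
rewrite (bigD1 (Ordinal hk)) //= eqxx mul1r big1 ?addr0 // => l Hl.
rewrite eqSS; case: eqP => [E|]; last by rewrite mul0r.
by case/eqP: Hl; apply/val_inj.
Qed.

Lemma compan_pow (q r : {poly F}) k : q \is monic -> (1 < size q)%N ->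
  (size r <= (size q).-1)%N ->
  compan q ^+ k *m coordv (size q).-1 r = coordv (size q).-1 (('X^k * r) %% q).
Proof.
move=> mq sq; elim: k r => [|k IH] r sr.
  by rewrite expr0 mul1mx mul1r modp_small // -(prednK (ltnW sq)) ltnS.
have q0 : q != 0 by rewrite monic_neq0.
have -> : compan q ^+ k.+1 = compan q ^+ k *m compan q by rewrite exprSr.
rewrite -mulmxA compan_mul // IH; last first.
  by rewrite -ltnS prednK ?ltn_modp // ltnW.
by rewrite modp_mul exprSr mulrA.
Qed.

Lemma coordvD s (p1 p2 : {poly F}) : coordv s (p1 + p2) = coordv s p1 + coordv s p2.
Proof. by apply/matrixP => i j; rewrite !mxE coefD. Qed.
Lemma coordvZ s c (p : {poly F}) : coordv s (c *: p) = c *: coordv s p.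
Proof. by apply/matrixP => i j; rewrite !mxE coefZ. Qed.
Lemma coordv0 s : coordv s (0 : {poly F}) = 0.
Proof. by apply/matrixP => i j; rewrite !mxE coef0. Qed.

Lemma modp_sum (q : {poly F}) n (G : 'I_n -> {poly F}) :
  (\sum_i G i) %% q = \sum_i (G i %% q).
Proof. exact: (big_morph (fun p => p %% q) (modpD q) (mod0p q)). Qed.

Lemma mxeval_compan (q P g : {poly F}) : q \is monic -> (1 < size q)%N ->
  (size g <= (size q).-1)%N ->
  mxeval (compan q) P *m coordv (size q).-1 g = coordv (size q).-1 ((P * g) %% q).
Proof.
move=> mq sq sg.
rewrite /mxeval mulmx_suml.
under eq_bigr do rewrite -scalemxAl compan_pow // -coordvZ.
rewrite -(big_morph _ (coordvD _) (coordv0 _)); congr coordv.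
under eq_bigr do rewrite -modpZl scalerAl.
rewrite -modp_sum; congr modp.
by rewrite -mulr_suml -poly_def coefK.
Qed.
End Comp.
Lemma root_facts (K : fieldType) (fK dK f0K PK : {poly K}) (a : K) :
  (forall m : nat, (0 < m)%N -> (m%:R : K) != 0) ->
  fK != 0 -> f0K * dK = fK -> PK * dK = fK^`() ->
  gcdp fK fK^`() %| dK -> root fK a ->
  [/\ root f0K a, ~~ (('X - a%:P) ^+ 2 %| f0K) &
      PK.[a] = (mup a fK)%:R * f0K^`().[a]].
Proof.
move=> ch fK0 ef ep dg ra.
set m := mup a fK; set u := 'X - a%:P.
have u0 : u != 0 by rewrite polyXsubC_eq0.
have m0 : (0 < m)%N by rewrite -XsubC_dvd // dvdp_XsubCl.
have hum : u ^+ m %| fK by rewrite -mup_geq.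
set q := fK %/ u ^+ m.
have efq : fK = q * u ^+ m by rewrite divpK.
have q0 : q != 0 by apply: contraNneq fK0 => q0; rewrite efq q0 mul0r.
have nq : ~~ root q a.
  apply/negP => /factor_theorem [r er].
  have : u ^+ m.+1 %| fK by rewrite efq er exprSr mulrAC -mulrA dvdp_mull.
  by rewrite -mup_geq // ltnn.
set T := q *+ m + u * q^`().
have eder : fK^`() = u ^+ m.-1 * T.
  rewrite efq derivM deriv_exp derivXsubC /T.
  case: (m) m0 => // k _ /=; rewrite exprSr; ring.
have Ta : T.[a] = q.[a] * m%:R.
  by rewrite /T /u !hornerE subrr mul0r addr0 hornerMn mulr_natr.
have nT : ~~ root T a by rewrite /root Ta mulf_neq0 // ch.
have um0 : u ^+ m.-1 != 0 by rewrite expf_neq0.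
have hd : u ^+ m.-1 %| dK.
  apply: dvdp_trans dg; rewrite dvdp_gcd eder dvdp_mulIl andbT.
  exact: dvdp_trans (dvdp_exp2l _ (leq_pred _)) hum.
have dd' : dK %| fK^`() by rewrite -ep dvdp_mulIr.
have nd : ~~ (u ^+ m %| dK).
  apply/negP => /dvdp_trans /(_ dd'); rewrite eder.
  rewrite -(prednK m0) exprSr dvdp_mul2l // dvdp_XsubCl.
  by apply/negP.
have rf0 : root f0K a.
  apply: contraR nd => nr.
  have cp : coprimep (u ^+ m) f0K.
    by apply: coprimep_expl; rewrite coprimep_sym coprimep_XsubC.
  by rewrite -(Gauss_dvdpr _ cp) ef.
split => //.
  apply/negP => h2.
  have : u ^+ 2 * u ^+ m.-1 %| fK by rewrite -ef dvdp_mul.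
  by rewrite -exprD add2n (prednK m0) -mup_geq // ltnn.
have [r er] := factor_theorem _ _ rf0.
have e1 : PK * fK = fK^`() * f0K by rewrite -{1}ef -ep; ring.
have eum : u ^+ m = u ^+ m.-1 * u by rewrite -exprSr prednK.
have e2 : (u ^+ m.-1 * u) * (PK * q) = (u ^+ m.-1 * u) * (T * r).
  have := e1; rewrite {1}efq eder er => e.
  transitivity (PK * (q * u ^+ m)); first by rewrite -exprSr prednK // mulrCA (mulrC _ q).
  by rewrite e -!mulrA; congr (_ * _); rewrite mulrA mulrC.
have e3 : PK * q = T * r := mulfI (mulf_neq0 um0 u0) e2.
have := congr1 (fun p => p.[a]) e3; rewrite /= !hornerM Ta => e4.
have qa : q.[a] != 0 by [].
have -> : f0K^`().[a] = r.[a].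
  by rewrite er derivM derivXsubC /u !hornerE subrr mulr0 add0r.
apply: (mulIf qa); move: e4 => ->; by rewrite -mulrA mulrC.
Qed.
Lemma f0_prod (K : fieldType) (fK f0K : {poly K}) (rs S : seq K) :
  fK = \prod_(z <- rs) ('X - z%:P) -> f0K %| fK -> f0K \is monic -> uniq S ->
  (forall x, (x \in S) = root fK x) ->
  (forall x, x \in S -> root f0K x /\ ~~ (('X - x%:P) ^+ 2 %| f0K)) ->
  f0K = \prod_(z <- S) ('X - z%:P).
Proof.
move=> efK dvf mf uS HS Hr.
set Q : {poly K} := \prod_(z <- S) ('X - z%:P).
have mQ : Q \is monic by apply: monic_prod_XsubC.
have hQ : Q %| f0K.
  apply: uniq_roots_dvdp; last by rewrite uniq_rootsE.
  by apply/allP => x /Hr [].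
have [g1 ef] : exists g1 : {poly K}, f0K = g1 * Q by exists (f0K %/ Q); rewrite divpK.
have [sg|sg] := leqP (size g1) 1.
  have eg : g1 = (g1`_0)%:P by apply: size1_polyC.
  have : lead_coef f0K = 1 by apply/eqP.
  rewrite [f0K]ef lead_coefM (eqP mQ) mulr1 [g1]eg lead_coefC => ->.
  by rewrite mul1r.
have g1f : g1 %| fK by apply: dvdp_trans dvf; rewrite [f0K]ef dvdp_mulIl.
rewrite efK in g1f.
have [msk e] := @dvdp_prod_XsubC _ _ rs id g1 g1f.
have := eqp_size e; rewrite size_prod_XsubC.
case E: (mask msk rs) => [|b l] /=; first by move=> h; rewrite h in sg.
move=> _.
have rb : root g1 b by rewrite (eqp_root e) root_prod_XsubC E mem_head.
have bS : b \in S by rewrite HS efK root_prod_XsubC (mem_mask (m:=msk)) // E mem_head.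
have [_ H2] := Hr b bS; case/negP: H2.
rewrite [f0K]ef expr2 dvdp_mul // dvdp_XsubCl // /Q root_prod_XsubC //.
Qed.

Lemma horner_mod (K : fieldType) (p d : {poly K}) x : root d x -> (p %% d).[x] = p.[x].
Proof.
move=> /eqP rd; have e := divp_eq p d.
by rewrite [in RHS]e hornerD hornerM rd mulr0 add0r.
Qed.

Theorem theorem2p1 (F : fieldType) (K : fieldExtType F)
    (f : {poly F}) (Sf : seq K) :
  [pchar F] =i pred0 ->
  f \is monic -> (1 < size f)%N ->
  splittingFieldFor 1%VS (map_poly (in_alg K) f) fullv ->
  uniq Sf ->
  (forall x : K, (x \in Sf) = root (map_poly (in_alg K) f) x) ->
  let f0 := f %/ mgcd f f^`() in
  let s := (size f0).-1 in
  let P := f^`() %/ mgcd f f^`() in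
  exists g h : {poly F},
    [/\ (size g <= s)%N,
        f0^`() * g + f0 * h = 1,
        (forall g' h' : {poly F}, (size g' <= s)%N ->
            f0^`() * g' + f0 * h' = 1 -> g' = g /\ h' = h) &
        (forall Mf : {poly K}, (size Mf <= size Sf)%N ->
            (forall a, a \in Sf -> Mf.[a] = (mup a (map_poly (in_alg K) f))%:R) ->
            coordv s Mf = map_mx (in_alg K) (mxeval (compan f0) P *m coordv s g))].
Proof.
move=> ch mf sf spl uS HS f0 s P.
have fn0 : f != 0 by rewrite monic_neq0.
have gn : gcdp f f^`() != 0 by rewrite gcdp_eq0 negb_and fn0.
have dE : mgcd f f^`() %= gcdp f f^`().
  by rewrite /mgcd eqp_scale // invr_eq0 lead_coef_eq0.
have ddf : mgcd f f^`() %| f by rewrite (eqp_dvdl _ dE) dvdp_gcdl.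
have ddf' : mgcd f f^`() %| f^`() by rewrite (eqp_dvdl _ dE) dvdp_gcdr.
have ef : f0 * mgcd f f^`() = f by rewrite /f0 divpK.
have ep : P * mgcd f f^`() = f^`() by rewrite /P divpK.
have dmon : mgcd f f^`() \is monic.
  by rewrite monicE /mgcd lead_coefZ mulVf // lead_coef_eq0.
have f0mon : f0 \is monic.
  have := mf; rewrite monicE -ef lead_coefM (eqP dmon) mulr1 //.
have f00 : f0 != 0 by rewrite monic_neq0.
have ch' : forall m : nat, (0 < m)%N -> (m%:R : K) != 0.
  move=> m m0; rewrite -(rmorph_nat (in_alg K)) fmorph_eq0.
  by have /pcharf0P -> := ch; rewrite -lt0n.
have fK0 : map_poly (in_alg K) f != 0 by rewrite map_poly_eq0.
have efK : map_poly (in_alg K) f0 * map_poly (in_alg K) (mgcd f f^`()) = map_poly (in_alg K) f.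
  by rewrite -rmorphM ef.
have epK : map_poly (in_alg K) P * map_poly (in_alg K) (mgcd f f^`()) = (map_poly (in_alg K) f)^`().
  by rewrite -rmorphM ep deriv_map.
have dgK : gcdp (map_poly (in_alg K) f) (map_poly (in_alg K) f)^`() %| map_poly (in_alg K) (mgcd f f^`()).
  by rewrite deriv_map -gcdp_map dvdp_map (eqp_dvdr _ dE) dvdpp.
have [rs ers _] := spl.
have erK : map_poly (in_alg K) f = \prod_(z <- rs) ('X - z%:P).
  by apply/eqP; rewrite -eqp_monic ?map_monic // monic_prod_XsubC.
have RF x (xS : x \in Sf) := @root_facts _ _ _ _ _ x ch' fK0 efK epK dgK (etrans (esym (HS x)) xS).
have eprod : map_poly (in_alg K) f0 = \prod_(z <- Sf) ('X - z%:P).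
  apply: (@f0_prod _ _ _ rs Sf erK) => //; first by rewrite -efK dvdp_mulIl.
    by rewrite map_monic.
  by move=> x xS; have [] := RF x xS.
have sSf : size f0 = (size Sf).+1 by rewrite -(size_map_poly (in_alg K)) eprod size_prod_XsubC.
have sf0 : (1 < size f0)%N.
  rewrite sSf ltnS lt0n size_eq0; apply/eqP => S0.
  move: sf; rewrite -(size_map_poly (in_alg K)) erK; clear ers; case: rs erK => [|r rs] erK.
    by rewrite big_nil size_poly1.
  have : r \in Sf by rewrite HS erK root_prod_XsubC mem_head.
  by rewrite S0.
have cop : coprimep f0 f0^`().
  rewrite -(coprimep_map (in_alg K)) -deriv_map eprod.
  by have := separable_prod_XsubC Sf; rewrite uS unlock.
have [g [h [sg egh]]] : exists g h : {poly F}, (size g <= s)%N /\ f0^`() * g + f0 * h = 1.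
  have /Bezout_eq1_coprimepP [[u v] /= euv] := cop.
  exists (v %% f0), (u + v %/ f0 * f0^`()); split.
    by rewrite /s -ltnS prednK ?ltn_modp // ltnW.
  have := euv; rewrite {1}(divp_eq v f0) => e; rewrite -e; ring.
exists g, h; split => //.
  move=> g' h' sg' e'.
  have e3 : f0^`() * (g' - g) = f0 * (h - h').
    apply/eqP; rewrite -subr_eq0; apply/eqP.
    transitivity ((f0^`() * g' + f0 * h') - (f0^`() * g + f0 * h)); first by ring.
    by rewrite e' egh subrr.
  have dv : f0 %| g' - g by rewrite -(Gauss_dvdpr _ cop) e3 dvdp_mulIl.
  have gg : g' = g.
    apply/eqP; rewrite -subr_eq0; apply: contraTT dv => nz.
    have sz : (size (g' - g)%R <= s)%N.
      by rewrite (leq_trans (size_polyD _ _)) // size_polyN geq_max sg' sg.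
    apply/negP => /(dvdp_leq nz) H1; have := leq_trans H1 sz.
    by rewrite /s -ltnS prednK ?ltnn // ltnW.
  split => //; move: e3; rewrite gg subrr mulr0 => /esym/eqP.
  by rewrite mulf_eq0 (negbTE f00) /= subr_eq0 => /eqP.
move=> Mf sMf HMf.
have eM : Mf = (map_poly (in_alg K) P * map_poly (in_alg K) g) %% map_poly (in_alg K) f0.
  apply/eqP; rewrite -subr_eq0; apply/eqP; apply: (@roots_geq_poly_eq0 _ _ Sf) => //.
    apply/allP => x xS; have [r0 _ ePx] := RF x xS.
    rewrite /root hornerD hornerN HMf // horner_mod // hornerM ePx.
    have eK : (map_poly (in_alg K) f0)^`() * map_poly (in_alg K) g + map_poly (in_alg K) f0 * map_poly (in_alg K) h = 1.
      by rewrite deriv_map -!rmorphM -rmorphD egh rmorph1.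
    have := congr1 (fun p => p.[x]) eK.
    rewrite /= !hornerE (eqP r0) mul0r addr0 => e.
    by rewrite -mulrA e mulr1 subrr.
  rewrite (leq_trans (size_polyD _ _)) // size_polyN geq_max sMf /=.
  have := ltn_modp (map_poly (in_alg K) P * map_poly (in_alg K) g) (map_poly (in_alg K) f0).
  by rewrite map_poly_eq0 f00 size_map_poly sSf ltnS => ->.
have E : mxeval (compan f0) P *m coordv s g = coordv s ((P * g) %% f0) :=
  @mxeval_compan F f0 P g f0mon sf0 sg.
rewrite E.
apply/matrixP => i j; rewrite !mxE eM.
by rewrite -rmorphM -map_modp coef_map.
Qed.
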